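(* Fix a test example $z'$ and $\lambda>0$. Assume $F_S\,\nabla_\theta f(z',\theta_S^* )\neq0$ and $\mathrm{Var}_{A\sim D_a}[f(z',\theta_A^* )]>0$. Then $\dot c_p(\lambda;z')>0$ if and only if $$r_{z',\lambda}\, t_{3,z',\lambda}>\Big(-\nabla_\theta f(z',\theta_S^* )^\top(F_S+\lambda I_p)^{-2}g_{z'}\Big)\, t_{2,z',\lambda}.$$
   Context: Let $n\ge 2$ and let $S=\{z_1,\dots,z_n\}$ be a training set. For parameters $\theta\in\mathbb{R}^p$, let $L(z,\theta)>0$ be a loss that is differentiable in $\theta$. Set $p(z,\theta):=e^{-L(z,\theta)}\in(0,1)$ and $f(z,\theta):=\ln\frac{p(z,\theta)}{1-p(z,\theta)}$. Let $\theta_S^*$ satisfy $\sum_{i=1}^n\nabla_\theta L(z_i,\theta_S^* )=0$. For every subset $A\subseteq S$, let $\theta_A^*\in\mathbb{R}^p$ be a fixed parameter vector. Fix $1\le a<n$, and let $D_a$ be the uniform distribution over the size-$a$ subsets of $S$. Let $J\in\mathbb{R}^{n\times p}$ have $i$-th row $\nabla_\theta L(z_i,\theta_S^* )^\top$, and let $F_S:=\frac1nJ^\top J$. For $\lambda>0$ define $\tau_\lambda(z',z):=-\nabla_\theta f(z',\theta_S^* )^\top(F_S+\lambda I_p)^{-1}\nabla_\theta L(z,\theta_S^* )$. Let $c_p(\lambda;z')$ be the Pearson correlation, under $A\sim D_a$, between $f(z',\theta_A^* )$ and $\sum_{z\in A}\tau_\lambda(z',z)$, and let $\dot c_p(\lambda;z'):=\partial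 c_p(\lambda;z')/\partial\lambda$. Define: - $\alpha_{z',i}:=\mathbb{E}_{A\sim D_a}[f(z',\theta_A^* )\mid z_i\in A]-\mathbb{E}_{A\sim D_a}[f(z',\theta_A^* )]$; - $g_{z'}:=\frac1n\sum_i\alpha_{z',i}\nabla_\theta L(z_i,\theta_S^* )$; - $t_{k,z',\lambda}:=\nabla_\theta f(z',\theta_S^* )^\top(F_S+\lambda I_p)^{-k}F_S\nabla_\theta f(z',\theta_S^* )$; - $r_{z',\lambda}:=-\nabla_\theta f(z',\theta_S^* )^\top(F_S+\lambda I_p)^{-1}g_{z'}$. *)

(* Defs.v *)
From HB Require Import structures.
From mathcomp Require Import all_boot all_order all_algebra.
From mathcomp Require Import all_classical all_reals all_analysis.
Set Implicit Arguments. Unset Strict Implicit. Unset Printing Implicit Defensive.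
Import Order.TTheory GRing.Theory Num.Theory.
Import numFieldNormedType.Exports.
Local Open Scope ring_scope.

(* Parameters theta live in R^p, represented as row vectors 'rV[R]_p.
   Gradients are column vectors 'cV[R]_p: the k-th entry is the
   directional derivative along the k-th canonical basis vector. *)
Definition grad (R : realType) (p : nat) (h : 'rV[R]_p -> R) (th : 'rV[R]_p)
  : 'cV[R]_p := \col_k ('D_(delta_mx ord0 k) h th).

Definition plik (R : realType) (p : nat) (Z : Type) (L : Z -> 'rV[R]_p -> R)
  (z : Z) (th : 'rV[R]_p) : R := expR (- L z th).
Definition flogit (R : realType) (p : nat) (Z : Type) (L : Z -> 'rV[R]_p -> R)
  (z : Z) (th : 'rV[R]_p) : R :=
  ln (plik L z th / (1 - plik L z th)).

(* Uniform distribution D_a over the size-a subsets of the index set 'I_n. *)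
Definition subsets_a (n a : nat) : {set {set 'I_n}} := [set A : {set 'I_n} | #|A| == a].

Definition Ea (R : realType) (n a : nat) (X : {set 'I_n} -> R) : R :=
  (\sum_(A in subsets_a n a) X A) / #|subsets_a n a|%:R.

Definition Ea_cond (R : realType) (n a : nat) (i : 'I_n) (X : {set 'I_n} -> R) : R :=
  (\sum_(A in subsets_a n a | i \in A) X A)
    / #|[set A in subsets_a n a | i \in A]|%:R.

Definition Cova (R : realType) (n a : nat) (X Y : {set 'I_n} -> R) : R :=
  Ea a (fun A => (X A - Ea a X) * (Y A - Ea a Y)).
Definition Vara (R : realType) (n a : nat) (X : {set 'I_n} -> R) : R :=
  Cova a X X.
Definition pearson (R : realType) (n a : nat) (X Y : {set 'I_n} -> R) : R :=
  Cova a X Y / Num.sqrt (Vara a X * Vara a Y).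

Section Influence.
Variables (R : realType) (p n : nat) (Z : Type) (L : Z -> 'rV[R]_p -> R)
  (z : 'I_n -> Z) (thetaS : 'rV[R]_p).

Definition Jmat : 'M[R]_(n, p) := \matrix_(i < n) (grad (L (z i)) thetaS)^T.
Definition FS : 'M[R]_p := n%:R^-1 *: ((Jmat)^T *m Jmat).
Definition Mlam (lam : R) : 'M[R]_p := FS + lam%:M.

Definition gradf (z' : Z) : 'cV[R]_p := grad (flogit L z') thetaS.

Definition tau (lam : R) (z' : Z) (zz : Z) : R :=
  - ((gradf z')^T *m invmx (Mlam lam) *m grad (L zz) thetaS) ord0 ord0.

Definition cp (a : nat) (thetaA : {set 'I_n} -> 'rV[R]_p) (z' : Z) (lam : R) : R :=
  pearson a (fun A => flogit L z' (thetaA A))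
            (fun A => \sum_(i in A) tau lam z' (z i)).

Definition alpha (a : nat) (thetaA : {set 'I_n} -> 'rV[R]_p) (z' : Z) (i : 'I_n) : R :=
  Ea_cond a i (fun A => flogit L z' (thetaA A)) - Ea a (fun A => flogit L z' (thetaA A)).

Definition gvec (a : nat) (thetaA : {set 'I_n} -> 'rV[R]_p) (z' : Z) : 'cV[R]_p :=
  n%:R^-1 *: \sum_(i < n) (alpha a thetaA z' i *: grad (L (z i)) thetaS).

Definition tk (k : nat) (z' : Z) (lam : R) : R :=
  ((gradf z')^T *m (invmx (Mlam lam)) ^+ k *m FS *m gradf z') ord0 ord0.

Definition rr (a : nat) (thetaA : {set 'I_n} -> 'rV[R]_p) (z' : Z) (lam : R) : R :=
  - ((gradf z')^T *m invmx (Mlam lam) *m gvec a thetaA z') ord0 ord0.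
End Influence.

(* Main.v *)
Require Import Defs.
From HB Require Import structures.
From mathcomp Require Import all_boot all_order all_algebra.
From mathcomp Require Import all_classical all_reals all_analysis.
From mathcomp Require Import ring zify.
Set Implicit Arguments. Unset Strict Implicit. Unset Printing Implicit Defensive.
Import Order.TTheory GRing.Theory Num.Theory.
Import numFieldNormedType.Exports.
Local Open Scope classical_set_scope.
Local Open Scope ring_scope.
Lemma dotself_ge0 (R : realType) p (v : 'rV[R]_p) : 0 <= (v *m v^T) 0 0.
Proof. by rewrite mxE; apply: sumr_ge0 => k _; rewrite mxE -expr2 sqr_ge0. Qed.
Lemma dotself_eq0 (R : realType) p (v : 'rV[R]_p) : (v *m v^T) 0 0 = 0 -> v = 0.
Proof.
rewrite mxE => /eqP; rewrite psumr_eq0; last by move=> k _; rewrite mxE -expr2 sqr_ge0.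
move=> /allP H; apply/matrixP => i k; rewrite !mxE (ord1 i).
have := H k (mem_index_enum _); rewrite mxE -expr2 sqrf_eq0 => /eqP //.
Qed.

Section MxAnalysis.
Variables (R : realType) (p : nat) (F : 'M[R]_p).
Hypothesis hF : forall x : 'cV[R]_p, 0 <= (x^T *m F *m x) 0 0.

Lemma unitM mu : 0 < mu -> (F + mu%:M) \in unitmx.
Proof.
move=> mu0; rewrite unitmxE unitfE; apply/negP => /det0P [v v0 vM].
have := hF v^T; rewrite trmxK => h1.
have : (v *m (F + mu%:M) *m v^T) 0 0 = 0 by rewrite vM mul0mx mxE.
rewrite mulmxDr mul_mx_scalar mulmxDl -scalemxAl mxE [X in _ + X]mxE => h2.
have h3 := dotself_ge0 v.
have : mu * (v *m v^T) 0 0 = 0.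
  apply/eqP; rewrite eq_le; apply/andP; split; last by rewrite mulr_ge0 // ltW.
  by rewrite -h2 lerDr.
move/eqP; rewrite mulf_eq0 gt_eqF //= => /eqP /dotself_eq0 v00.
by move: v0; rewrite v00 eqxx.
Qed.
Lemma resolvent mu la : 0 < mu -> 0 < la ->
  invmx (F + mu%:M) - invmx (F + la%:M) =
  (la - mu) *: (invmx (F + mu%:M) *m invmx (F + la%:M)).
Proof.
move=> mu0 la0.
have eA := mulVmx (unitM mu0); have eB := mulmxV (unitM la0).
transitivity (invmx (F + mu%:M) *m ((F + la%:M) - (F + mu%:M)) *m invmx (F + la%:M)).
  by rewrite mulmxBr mulmxBl -!mulmxA eB mulmx1 !mulmxA eA mul1mx.
have -> : (F + la%:M) - (F + mu%:M) = (la - mu)%:M.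
  by rewrite opprD addrACA subrr add0r raddfB.
by rewrite mul_mx_scalar -scalemxAl.
Qed.

Definition PM : 'M[{poly R}]_p := map_mx polyC F + ('X)%:M.

Lemma PM_eval mu : map_mx (horner_eval mu) PM = F + mu%:M.
Proof.
apply/matrixP => i j; rewrite !mxE /horner_eval hornerD hornerC hornerMn hornerX.
by [].
Qed.

Lemma detPM mu : 0 < mu -> (\det PM).[mu] != 0.
Proof.
move=> mu0; have := unitM mu0; rewrite unitmxE unitfE -PM_eval det_map_mx.
by [].
Qed.

Lemma invM_eval mu : 0 < mu -> invmx (F + mu%:M) =
  ((\det PM).[mu])^-1 *: map_mx (horner_eval mu) (\adj PM).
Proof.
move=> mu0; rewrite /invmx (unitM mu0) -PM_eval map_mx_adj det_map_mx.
by [].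
Qed.

Definition bil (x w : 'cV[R]_p) (B : 'M[R]_p) := (x^T *m B *m w) 0 0.

Lemma bilZ x w c B : bil x w (c *: B) = c * bil x w B.
Proof. by rewrite /bil -scalemxAr -scalemxAl mxE. Qed.

Definition Pxw (x w : 'cV[R]_p) (Q : 'M[{poly R}]_p) : {poly R} :=
  \sum_j \sum_i (x i 0 * w j 0) *: Q i j.

Lemma bil_eval x w Q mu : bil x w (map_mx (horner_eval mu) Q) = (Pxw x w Q).[mu].
Proof.
rewrite /bil /Pxw mxE horner_sum; apply: eq_bigr => j _.
rewrite mxE horner_sum mulr_suml; apply: eq_bigr => i _.
by rewrite !mxE hornerZ /horner_eval mulrAC mulrC !mulrA.
Qed.

Definition phi (x w : 'cV[R]_p) (mu : R) := bil x w (invmx (F + mu%:M)).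

Lemma phi_derivable x w la : 0 < la -> derivable (phi x w) la 1.
Proof.
move=> la0.
pose g := (fun y => ((\det PM).[y])^-1) * horner (Pxw x w (\adj PM)).
have dg : derivable g la 1.
  have h1 := is_derive_poly (Pxw x w (\adj PM)) la.
  have h2 := is_deriveV (detPM la0) (is_derive_poly (\det PM) la).
  have h3 := is_deriveM h2 h1.
  exact: (@ex_derive _ _ _ _ _ _ _ h3).
apply: (near_eq_derivable _ dg).
near=> mu.
have mu0 : 0 < mu by near: mu; exact: lt_nbhsr.
by rewrite /g /phi /= invM_eval // bilZ bil_eval.
Unshelve. all: by end_near.
Qed.

Lemma phi_cont x w la : 0 < la -> {for la, continuous (phi x w)}.
Proof.
move=> la0; apply: differentiable_continuous; apply/derivable1_diffP.
exact: phi_derivable.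
Qed.

Lemma bilB x w A B : bil x w (A - B) = bil x w A - bil x w B.
Proof.
rewrite /bil mulmxBr mulmxBl; set a := x^T *m A *m w; set b := x^T *m B *m w.
by rewrite !mxE.
Qed.

Lemma phi_derive (x w : 'cV[R]_p) (la : R) : 0 < la ->
  is_derive la 1 (phi x w)
    (- bil x w (invmx (F + la%:M) *m invmx (F + la%:M))).
Proof.
move=> la0; apply/is_derive1_caratheodory.
pose psi := phi x (invmx (F + la%:M) *m w).
have psiE z : psi z = bil x w (invmx (F + z%:M) *m invmx (F + la%:M)).
  by rewrite /psi /phi /bil !mulmxA.
exists (fun z => if 0 < z then - psi z else
          if z == la then 0 else (phi x w z - phi x w la) / (z - la)).
split.
- move=> z; case: ifP => z0.
    rewrite /phi -bilB resolvent // bilZ psiE.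
    by rewrite mulNr -mulrN opprB mulrC.
  case: ifP => zla; first by move/eqP: zla z0 => ->; rewrite la0.
  by rewrite divfK // subr_eq0 zla.
- have cpsi : (fun z => - psi z) @ la --> - psi la.
    by apply: cvgN; exact: phi_cont.
  rewrite /prop_for /continuous_at la0; apply: cvg_trans cpsi.
  apply: near_eq_cvg; near=> z.
  have z0 : 0 < z by near: z; exact: lt_nbhsr.
  by rewrite z0.
- by rewrite la0 psiE.
Unshelve. all: by end_near.
Qed.

End MxAnalysis.
Section LinAlg.
Variables (R : realType) (p n : nat) (Z : Type) (L : Z -> 'rV[R]_p -> R)
  (z : 'I_n -> Z) (thetaS : 'rV[R]_p).
Hypothesis n0 : (0 < n)%N.
Let G i := grad (L (z i)) thetaS.
Let F := FS L z thetaS.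
Let J := Jmat L z thetaS.

Lemma n_neq0 : (n%:R : R) != 0.
Proof. by rewrite pnatr_eq0 -lt0n. Qed.

Lemma Jrow (w : 'cV[R]_p) i : (J *m w) i 0 = ((G i)^T *m w) 0 0.
Proof. by rewrite !mxE; apply: eq_bigr => k _; rewrite !mxE. Qed.

Lemma J2 (x y : 'cV[R]_p) :
  \sum_i ((G i)^T *m x) 0 0 * ((G i)^T *m y) 0 0 = n%:R * (x^T *m F *m y) 0 0.
Proof.
rewrite /F /FS -/J -scalemxAr -scalemxAl mxE mulrA mulfV ?n_neq0 // mul1r.
rewrite mulmxA -trmx_mul -mulmxA mxE; apply: eq_bigr => i _.
rewrite /J /Jmat; rewrite !mxE; congr (_ * _); apply: eq_bigr => k _; rewrite !mxE //.
Qed.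

Lemma F_psd (x : 'cV[R]_p) : 0 <= (x^T *m F *m x) 0 0.
Proof.
rewrite -(@pmulr_rge0 _ (n%:R)) ?ltr0n // -J2.
by apply: sumr_ge0 => i _; rewrite -expr2 sqr_ge0.
Qed.

Lemma F_sym : F^T = F.
Proof. by rewrite /F /FS linearZ /= trmx_mul trmxK. Qed.

Lemma M_sym mu : (F + mu%:M)^T = F + mu%:M.
Proof. by rewrite linearD /= F_sym tr_scalar_mx. Qed.

Lemma Minv_sym mu : (invmx (F + mu%:M))^T = invmx (F + mu%:M).
Proof. by rewrite trmx_inv M_sym. Qed.

Lemma Minv_comm mu : 0 < mu -> invmx (F + mu%:M) *m F = F *m invmx (F + mu%:M).
Proof.
move=> mu0; have u := unitM F_psd mu0.
have cFM : F *m (F + mu%:M) = (F + mu%:M) *m F.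
  by rewrite mulmxDr mulmxDl mul_mx_scalar mul_scalar_mx.
set M := F + mu%:M in u cFM *; set Mi := invmx M.
rewrite -[LHS]mulmx1 -(mulmxV u) -/Mi mulmxA -[Mi *m F *m M]mulmxA cFM.
by rewrite !mulmxA (mulVmx u) mul1mx.
Qed.
End LinAlg.

Local Close Scope classical_set_scope.
Section Counting.
Variables (n a : nat).
Hypotheses (n2 : (2 <= n)%N) (a1 : (1 <= a)%N) (an : (a < n)%N).
Let S := subsets_a n a.

Lemma cardS : #|S| = 'C(n, a).
Proof. by rewrite /S /subsets_a card_draws card_ord. Qed.

Lemma card_split (P : pred {set 'I_n}) :
  (#|[set A in S | P A]| + #|[set A in S | ~~ P A]|)%N = #|S|.
Proof.
rewrite -(cardsID [set A | P A] S). congr (_ + _)%N; apply: eq_card => A; rewrite !inE //.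
by rewrite andbC.
Qed.

Lemma card_sub (B : {set 'I_n}) :
  #|[set A in S | A \subset B]| = 'C(#|B|, a).
Proof.
rewrite -cards_draws; apply: eq_card => A; rewrite !inE andbC.
by [].
Qed.

Lemma notin_sub (i : 'I_n) (A : {set 'I_n}) : (i \notin A) = (A \subset ~: [set i]).
Proof. by rewrite finset.subsetC finset.sub1set finset.in_setC. Qed.

Lemma card_in (i : 'I_n) : #|[set A in S | i \in A]| = 'C(n.-1, a.-1).
Proof.
have := card_split (fun A => i \in A).
have -> : #|[set A in S | i \notin A]| = 'C(n.-1, a).
  have -> : n.-1 = #|[set~ i]| by rewrite cardsC1 card_ord.
  rewrite -card_sub; apply: eq_card => A.
  by rewrite !inE notin_sub.
rewrite cardS.
have hb : forall m k, (0 < m)%N -> (0 < k)%N ->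
    'C(m, k) = ('C(m.-1, k) + 'C(m.-1, k.-1))%N.
  by move=> [|m] [|k] //= _ _; rewrite binS.
rewrite (hb n a) ?(ltn_trans _ n2) // [in X in _ = X]addnC => /eqP; by rewrite eqn_add2r => /eqP.
Qed.

Lemma card_split0 (T0 : {set {set 'I_n}}) (P : pred {set 'I_n}) :
  (#|[set A in T0 | P A]| + #|[set A in T0 | ~~ P A]|)%N = #|T0|.
Proof.
rewrite -(cardsID [set A | P A] T0).
congr (_ + _)%N; apply: eq_card => A; rewrite !inE //.
by rewrite andbC.
Qed.

Lemma binS' m k : (0 < m)%N -> (0 < k)%N ->
    'C(m, k) = ('C(m.-1, k) + 'C(m.-1, k.-1))%N.
Proof. by case: m k => [|m] [|k] //= _ _; rewrite binS. Qed.

Lemma card_in_out (i j : 'I_n) : i != j ->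
  #|[set A in S | (i \in A) && (j \notin A)]| = 'C(n.-2, a.-1).
Proof.
move=> ij.
have := card_split0 [set A in S | j \notin A] (fun A => i \in A).
have -> : #|[set A in [set A in S | j \notin A] | i \in A]| =
          #|[set A in S | (i \in A) && (j \notin A)]|.
  by apply: eq_card => A; rewrite !inE -andbA (andbC (j \notin A)).
have -> : #|[set A in [set A in S | j \notin A] | i \notin A]| = 'C(n.-2, a).
  have -> : n.-2 = #|~: [set i; j]|.
    have := cardsC [set i; j]; rewrite cards2 ij card_ord; set x := #|~: _|; clearbody x.
    by move=> <-; rewrite add2n.
  rewrite -card_sub; apply: eq_card => A.
  rewrite !inE finset.subsetC finset.subUset !finset.sub1set !finset.in_setC.
  by rewrite andbAC andbA.
have -> : #|[set A in S | j \notin A]| = 'C(n.-1, a).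
  have -> : n.-1 = #|[set~ j]| by rewrite cardsC1 card_ord.
  by rewrite -card_sub; apply: eq_card => A; rewrite !inE notin_sub.
rewrite (@binS' (n.-1) a) ?a1 //; last by case: n n2 => [|[|m]].
by rewrite [in X in _ = X]addnC => /eqP; rewrite eqn_add2r => /eqP.
Qed.

Lemma card_in_in (i j : 'I_n) : i != j ->
  (#|[set A in S | (i \in A) && (j \in A)]| + 'C(n.-2, a.-1))%N = 'C(n.-1, a.-1).
Proof.
move=> ij; rewrite -(card_in_out ij) -(card_in i).
rewrite -(card_split0 [set A in S | i \in A] (fun A => j \in A)).
by congr (_ + _)%N; apply: eq_card => A; rewrite !inE andbA.
Qed.

Lemma sum_ind (R : realType) (P : pred {set 'I_n}) :
  \sum_(A in S) ((P A)%:R : R) = #|[set A in S | P A]|%:R.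
Proof.
transitivity (\sum_(A in [set A in S | P A]) (1:R)); last by rewrite sumr_const.
rewrite big_mkcond [RHS]big_mkcond /=; apply: eq_bigr => A _.
rewrite [in RHS]inE; case: (P A); rewrite ?andbT ?andbF //=.
by case: (A \in S).
Qed.

Lemma pair_count (R : realType) (i j : 'I_n) :
  \sum_(A in S) (((i \in A)%:R : R) * (j \in A)%:R) =
  'C(n.-1, a.-1)%:R - 'C(n.-2, a.-1)%:R + (i == j)%:R * 'C(n.-2, a.-1)%:R.
Proof.
have -> : \sum_(A in S) (((i \in A)%:R : R) * (j \in A)%:R) =
          \sum_(A in S) (((i \in A) && (j \in A))%:R : R).
  by apply: eq_bigr => A _; case: (i \in A); case: (j \in A); rewrite ?mulr1 ?mulr0.
rewrite sum_ind; case: eqP => [<-|/eqP ij].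
  rewrite mul1r subrK -(card_in i); congr (_ %:R); apply: eq_card => A.
  by rewrite !inE andbb.
by rewrite mul0r addr0 -(card_in_in ij) natrD addrK.
Qed.

End Counting.

Section Moments.
Variables (R : realType) (n a : nat).
Hypotheses (n2 : (2 <= n)%N) (a1 : (1 <= a)%N) (an : (a < n)%N).
Variables (X : {set 'I_n} -> R) (u : 'I_n -> R).
Hypothesis Hu : \sum_i u i = 0.
Let S := subsets_a n a.
Let Y (A : {set 'I_n}) := \sum_(i in A) u i.
Let c1 : R := 'C(n.-1, a.-1)%:R.
Let c2 : R := 'C(n.-2, a.-1)%:R.

Lemma sum_inE (A : {set 'I_n}) (f : 'I_n -> R) :
  \sum_(i in A) f i = \sum_i (i \in A)%:R * f i.
Proof.
by rewrite big_mkcond; apply: eq_bigr => i _; case: (i \in A); rewrite ?mul1r ?mul0r.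
Qed.

Lemma sumgY (g : {set 'I_n} -> R) :
  \sum_(A in S) g A * Y A = \sum_i u i * \sum_(A in S) (i \in A)%:R * g A.
Proof.
under eq_bigr => A _ do rewrite /Y sum_inE mulr_sumr.
rewrite exchange_big /=; apply: eq_bigr => i _; rewrite mulr_sumr.
by apply: eq_bigr => A _; rewrite mulrCA mulrA mulrC.
Qed.

Lemma cnt_in (i : 'I_n) : \sum_(A in S) ((i \in A)%:R : R) = c1.
Proof. by rewrite (@sum_ind n a R (fun A => i \in A)) (card_in n2 a1). Qed.

Lemma c1_gt0 : 0 < c1.
Proof.
by rewrite /c1 ltr0n bin_gt0 -!subn1 leq_sub2r // ltnW.
Qed.

Lemma EY0 : Ea a Y = 0.
Proof.
rewrite /Ea (eq_bigr (fun A => 1 * Y A)); last by move=> A _; rewrite mul1r.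
rewrite sumgY (eq_bigr (fun i => u i * c1)); last first.
  by move=> i _; rewrite -(cnt_in i); congr (_ * _); apply: eq_bigr => A _; rewrite mulr1.
by rewrite -mulr_suml Hu !mul0r.
Qed.

Lemma CovXY : Cova a X Y =
  (c1 * \sum_i u i * (Ea_cond a i X - Ea a X)) / #|S|%:R.
Proof.
rewrite /Cova EY0; set E := Ea a X; rewrite /Ea; congr (_ / _).
under eq_bigr => A _ do rewrite subr0.
rewrite sumgY mulr_sumr; apply: eq_bigr => i _; rewrite mulrCA; congr (_ * _).
have -> : \sum_(A in S) (((i \in A)%:R : R) * (X A - E)) =
          \sum_(A in S | i \in A) (X A - E).
  by rewrite big_mkcondr; apply: eq_bigr => A _; case: (i \in A); rewrite ?mul1r ?mul0r.
rewrite sumrB sumr_const /Ea_cond -/S.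
have hc : #|[set A in S | i \in A]|%:R = c1 :> R by rewrite (card_in n2 a1).
have -> : #|[pred A in S | i \in A]| = #|[set A in S | i \in A]|.
  by apply: eq_card => A; rewrite !inE.
rewrite -[E *+ _]mulr_natr hc mulrBr (mulrC E c1) (mulrC c1 (_ / c1)) divfK //; exact: lt0r_neq0 c1_gt0.
Qed.

Lemma VarY : Vara a Y = (c2 * \sum_i u i ^+ 2) / #|S|%:R.
Proof.
rewrite /Vara /Cova EY0 /Ea; congr (_ / _).
under eq_bigr => A _ do rewrite subr0.
rewrite sumgY.
have h i : \sum_(A in S) (i \in A)%:R * Y A = \sum_j u j * (c1 - c2 + (j == i)%:R * c2).
  by rewrite sumgY; apply: eq_bigr => j _; rewrite -(pair_count n2 a1).
under eq_bigr => i _ do rewrite h.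
transitivity (\sum_i \sum_j (u i * u j * (c1 - c2)) + \sum_i \sum_j (u i * u j * ((j == i)%:R * c2))).
  rewrite -big_split /=; apply: eq_bigr => i _; rewrite -big_split mulr_sumr /=.
  by apply: eq_bigr => j _; rewrite -mulrDr mulrA.
rewrite [X in X + _](eq_bigr (fun i => u i * (\sum_j u j) * (c1 - c2))); last first.
  by move=> i _; rewrite mulr_sumr mulr_suml.
rewrite Hu big1 ?add0r; last by move=> i _; rewrite !mulr0 mul0r.
rewrite mulr_sumr; apply: eq_bigr => i _.
rewrite (bigD1 i) //= eqxx mul1r big1 ?addr0; first by rewrite mulrC expr2.
by move=> j /negbTE ->; rewrite mul0r mulr0.
Qed.
End Moments.
Local Open Scope classical_set_scope.
Local Open Scope ring_scope.

Section Main.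
Variables (R : realType) (p n : nat) (Z : Type) (L : Z -> 'rV[R]_p -> R)
  (z : 'I_n -> Z) (thetaS : 'rV[R]_p) (thetaA : {set 'I_n} -> 'rV[R]_p)
  (a : nat) (z' : Z).
Hypotheses (n2 : (2 <= n)%N) (a1 : (1 <= a)%N) (an : (a < n)%N).
Hypothesis HG : \sum_(i < n) grad (L (z i)) thetaS = 0.

Let n0 : (0 < n)%N. Proof. exact: ltn_trans n2. Qed.
Let G i := grad (L (z i)) thetaS.
Let F := FS L z thetaS.
Let v := gradf L thetaS z'.
Let X A := flogit L z' (thetaA A).
Let g := gvec L z thetaS a thetaA z'.
Let hF := F_psd L z thetaS n0.

Lemma tr11 (A : 'M[R]_1) : A 0 0 = A^T 0 0.
Proof. by rewrite mxE. Qed.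

Lemma phi_sym (x w : 'cV[R]_p) mu : phi F x w mu = phi F w x mu.
Proof.
by rewrite /phi /bil tr11 !trmx_mul trmxK (Minv_sym L z thetaS) mulmxA.
Qed.

Lemma sum_tau mu : \sum_i tau L z thetaS mu z' (z i) = 0.
Proof.
rewrite /tau sumrN -summxE -mulmx_sumr.
by rewrite (_ : \sum_i grad (L (z i)) thetaS = 0) // mulmx0 mxE oppr0.
Qed.

Lemma sum_tau_alpha mu :
  \sum_i tau L z thetaS mu z' (z i) *
     (Ea_cond a i X - Ea a X) = n%:R * rr L z thetaS a thetaA z' mu.
Proof.
rewrite /rr /gvec -scalemxAr mxE mulrN mulrA mulfV ?n_neq0 // mul1r.
rewrite mulmx_sumr summxE -sumrN; apply: eq_bigr => i _.
rewrite /tau -scalemxAr; set t := (_ *m grad (L (z i)) thetaS).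
by rewrite [X in _ = - X]mxE mulNr mulrC.
Qed.

Lemma sq_phi mu : 0 < mu ->
  \sum_i (phi F (G i) v mu)^+2 = n%:R * tk L z thetaS 2 z' mu.
Proof.
move=> mu0.
under eq_bigr => i _ do rewrite expr2 /phi /bil -mulmxA.
rewrite (J2 L z thetaS n0) /tk expr2 -mulmxE; congr (_ * _).
rewrite trmx_mul (Minv_sym L z thetaS) -!mulmxA /Mlam -/F -/v.
by rewrite [F *m (_ *m v)]mulmxA -(Minv_comm L z thetaS n0 mu0) -mulmxA.
Qed.


Let N : R := #|subsets_a n a|%:R.
Let c1 : R := 'C(n.-1, a.-1)%:R.
Let c2 : R := 'C(n.-2, a.-1)%:R.
Let VX := Vara a X.
Let K0 := c1 * n%:R / N.
Let K1 := VX * (c2 * n%:R / N).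
Let t2f := n%:R^-1 \*: \sum_(i < n) (phi F (G i) v * phi F (G i) v).

Lemma t2fE mu : t2f mu = n%:R^-1 * \sum_i (phi F (G i) v mu)^+2.
Proof.
rewrite /t2f /= fct_sumE; congr (_ * _).
Qed.

Lemma t2f_tk mu : 0 < mu -> t2f mu = tk L z thetaS 2 z' mu.
Proof. by move=> mu0; rewrite t2fE sq_phi // mulKf ?n_neq0. Qed.

Lemma cp_eq mu : 0 < mu ->
  cp L z thetaS a thetaA z' mu =
  K0 * rr L z thetaS a thetaA z' mu * (Num.sqrt (K1 * t2f mu))^-1.
Proof.
move=> mu0; rewrite /cp /pearson.
rewrite (CovXY n2 a1 an _ (sum_tau mu)) (VarY n2 a1 (sum_tau mu)).
rewrite sum_tau_alpha.
have -> : \sum_i (tau L z thetaS mu z' (z i))^+2 = n%:R * tk L z thetaS 2 z' mu.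
  rewrite -sq_phi //; apply: eq_bigr => i _.
  by rewrite /tau sqrrN -/(phi F v (G i) mu) phi_sym.
rewrite t2f_tk // -/N -/c1 -/c2 -/VX /K0 /K1.
have -> : VX * (c2 * (n%:R * tk L z thetaS 2 z' mu) / N) =
          VX * (c2 * n%:R / N) * tk L z thetaS 2 z' mu by ring.
by ring.
Qed.

Lemma T2_gt0 mu : 0 < mu -> F *m v != 0 -> 0 < tk L z thetaS 2 z' mu.
Proof.
move=> mu0 Fv; have hn : (0 : R) < n%:R by rewrite ltr0n.
have hs : 0 <= \sum_i (phi F (G i) v mu)^+2 by apply: sumr_ge0 => i _; exact: sqr_ge0.
rewrite -(pmulr_rgt0 _ hn) -sq_phi // lt_def hs andbT.
apply: contra Fv => /eqP /psumr_eq0P H.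
have H' i : phi F (G i) v mu = 0.
  by apply/eqP; rewrite -sqrf_eq0; apply/eqP; apply: H => // j _; exact: sqr_ge0.
set Mi := invmx (F + mu%:M).
have JM : Jmat L z thetaS *m (Mi *m v) = 0.
  apply/matrixP => i j; rewrite (ord1 j) (Jrow L z thetaS) mulmxA [RHS]mxE.
  exact: H'.
have FM : F *m (Mi *m v) = 0.
  by rewrite /F /FS -scalemxAl -mulmxA JM mulmx0 scaler0.
have u := unitM hF mu0.
rewrite -[F *m v]mul1mx -(mulmxV u) -/Mi -!mulmxA [Mi *m (F *m v)]mulmxA.
by rewrite (Minv_comm L z thetaS n0 mu0) -/Mi -mulmxA FM mulmx0.
Qed.

Lemma t3_eq mu : 0 < mu ->
  \sum_i phi F (G i) v mu * bil (G i) v (invmx (F + mu%:M) *m invmx (F + mu%:M))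
   = n%:R * tk L z thetaS 3 z' mu.
Proof.
move=> mu0; set Mi := invmx (F + mu%:M).
under eq_bigr => i _ do rewrite /phi /bil -/Mi -!mulmxA.
rewrite (J2 L z thetaS n0) /tk; congr (_ * _).
rewrite /Mlam -/F -/v -/Mi exprS expr2 -!mulmxE trmx_mul.
have -> : Mi^T = Mi by exact: (Minv_sym L z thetaS).
have C : Mi *m F = F *m Mi by exact: (Minv_comm L z thetaS n0 mu0).
rewrite -!mulmxA.
suff -> : Mi *m (F *m (Mi *m (Mi *m v))) = Mi *m (Mi *m (Mi *m (F *m v))) by [].
by rewrite [F *m (Mi *m _)]mulmxA -C -mulmxA [F *m (Mi *m v)]mulmxA -C -mulmxA.
Qed.

Lemma sE (x y : R) : x *: y = x * y. Proof. by []. Qed.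

Lemma main_deriv lam : 0 < lam -> F *m v != 0 -> 0 < VX ->
  (0 < derive1 (cp L z thetaS a thetaA z') lam <->
   rr L z thetaS a thetaA z' lam * tk L z thetaS 3 z' lam >
   (- ((gradf L thetaS z')^T *m (invmx (Mlam L z thetaS lam)) ^+ 2
        *m gvec L z thetaS a thetaA z') ord0 ord0)
   * tk L z thetaS 2 z' lam).
Proof.
move=> lam0 Fv VX0.
have hN : 0 < N by rewrite /N cardS ltr0n bin_gt0 ltnW.
have hc1 : 0 < c1 by rewrite /c1 ltr0n bin_gt0; lia.
have hc2 : 0 < c2 by rewrite /c2 ltr0n bin_gt0; lia.
have hn : (0 : R) < n%:R by rewrite ltr0n.
have hK0 : 0 < K0 by rewrite /K0 divr_gt0 // mulr_gt0.
have hK1 : 0 < K1 by rewrite /K1 mulr_gt0 // divr_gt0 // mulr_gt0.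
have hT2 := T2_gt0 lam0 Fv.
set Mi := invmx (F + lam%:M).
set T2 := tk L z thetaS 2 z' lam.
set T3 := tk L z thetaS 3 z' lam.
set RR := rr L z thetaS a thetaA z' lam.
set SS := - ((gradf L thetaS z')^T *m (invmx (Mlam L z thetaS lam)) ^+ 2
        *m gvec L z thetaS a thetaA z') ord0 ord0.
have dphi x w := phi_derive hF x w lam0.
have dr : is_derive lam 1 (rr L z thetaS a thetaA z') (- SS).
  have e : rr L z thetaS a thetaA z' = - phi F v g by apply/funext.
  rewrite e; apply: is_derive_eq (is_deriveN (dphi v g)) _.
  by rewrite opprK /SS.
have dt2 : is_derive lam 1 t2f (- (2 * T3)).
  have h := is_deriveZ (n%:R^-1) (@is_derive_sum _ _ _ _
     (fun i => phi F (G i) v * phi F (G i) v) lam 1 _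
     (fun i => is_deriveM (dphi (G i) v) (dphi (G i) v))).
  apply: is_derive_eq h _.
  rewrite sE (eq_bigr (fun i => - 2 * (phi F (G i) v lam *
        bil (G i) v (invmx (F + lam%:M) *m invmx (F + lam%:M))))); last first.
    by move=> i _; rewrite !sE; ring.
  rewrite -mulr_sumr t3_eq // -/T3.
  by field; rewrite n_neq0.
have t2l : t2f lam = T2 by rewrite t2f_tk.
set Sq := Num.sqrt (K1 * T2).
have hSq : 0 < Sq by rewrite sqrtr_gt0 mulr_gt0.
have hSq2 : Sq ^+ 2 = K1 * T2 by rewrite sqr_sqrtr // ltW // mulr_gt0.
have hpos : 0 < (K1 \*: t2f) lam by rewrite /= sE t2l mulr_gt0.
have ds := is_derive1_comp (is_derive1_sqrt hpos) (is_deriveZ K1 dt2).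
have hsq : 0 < Num.sqrt ((K1 \*: t2f) lam) by rewrite sqrtr_gt0.
have dq := @is_deriveV _ (Num.sqrt \o (K1 \*: t2f)) lam _ 1 (lt0r_neq0 hsq) ds.
have dh := is_deriveM (is_deriveZ K0 dr) dq.
have Hnear : \forall mu \near lam,
   (K0 \*: rr L z thetaS a thetaA z' * (fun y => ((Num.sqrt \o K1 \*: t2f) y)^-1)) mu
     = cp L z thetaS a thetaA z' mu.
  near=> mu.
  have mu0 : 0 < mu by near: mu; exact: lt_nbhsr.
  by rewrite (cp_eq mu0).
have dcp := near_eq_is_derive Hnear dh.
rewrite derive1E; case: dcp => _ ->.
rewrite /= !sE t2l -/Sq -/RR.
have -> : K0 * RR * (- Sq ^- 2 * ((2 * Sq)^-1 * (K1 * - (2 * T3)))) +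
    Sq^-1 * (K0 * - SS) = K0 / Sq ^+ 3 * (K1 * (RR * T3 - SS * T2)).
  have -> : K1 * (RR * T3 - SS * T2) = K1 * RR * T3 - SS * Sq ^+ 2.
    by rewrite hSq2; ring.
  by field; rewrite gt_eqF.
rewrite pmulr_rgt0 ?divr_gt0 ?exprn_gt0 // pmulr_rgt0 // subr_gt0.
by [].
Unshelve. all: by end_near.
Qed.

End Main.

Theorem mainTheorem2 (R : realType) (p n : nat) (Z : Type)
  (L : Z -> 'rV[R]_p -> R) (z : 'I_n -> Z) (thetaS : 'rV[R]_p)
  (thetaA : {set 'I_n} -> 'rV[R]_p) (a : nat) (z' : Z) (lam : R) :
  (2 <= n)%N ->
  (1 <= a)%N -> (a < n)%N ->
  (forall zz th, 0 < L zz th) ->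
  (forall zz th, differentiable (L zz) th) ->
  \sum_(i < n) grad (L (z i)) thetaS = 0 ->
  0 < lam ->
  FS L z thetaS *m gradf L thetaS z' != 0 ->
  0 < Vara a (fun A => flogit L z' (thetaA A)) ->
  (0 < derive1 (cp L z thetaS a thetaA z') lam <->
   rr L z thetaS a thetaA z' lam * tk L z thetaS 3 z' lam >
   (- ((gradf L thetaS z')^T *m (invmx (Mlam L z thetaS lam)) ^+ 2
        *m gvec L z thetaS a thetaA z') ord0 ord0)
   * tk L z thetaS 2 z' lam).
Proof.
move=> n2 a1 an _ _ HG lam0 Fv VX0.
exact: (main_deriv n2 a1 an HG lam0 Fv VX0).
Qed.
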